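(* Let $M$ be a compact manifold, $D\subset M$ open, $B\subset M$ open with $\overline B\subset D$, and let $h_1,h_2,\dots$ be maps each sending $\overline D$ into $D$ and being a contraction of rate $\beta<1$ on $\overline D$. Assume $B\subset\bigcup_{i=1}^\infty h_i(B)$. Then for every $x\in B$ there is a sequence $(i_j)_{j\ge1}$ of positive integers such that $x=\lim_{n\to\infty}h_{i_1}\circ\dots\circ h_{i_n}(y)$ for all $y\in B$. *)

(* Defs.v *)
From HB Require Import structures.
From mathcomp Require Import all_boot all_order all_algebra.
From mathcomp Require Import all_classical all_reals all_analysis.
Set Implicit Arguments. Unset Strict Implicit. Unset Printing Implicit Defensive.
Import Order.TTheory GRing.Theory Num.Theory.
Import numFieldNormedType.Exports.
Local Open Scope classical_set_scope.
Local Open Scope ring_scope.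

Definition is_metric (R : realType) (M : Type) (d : M -> M -> R) : Prop :=
  [/\ forall x y, 0 <= d x y,
      forall x y, d x y = 0 <-> x = y,
      forall x y, d x y = d y x &
      forall x y z, d x z <= d x y + d y z].

Definition metric_compatible (R : realType) (M : topologicalType)
  (d : M -> M -> R) : Prop :=
  forall (x : M) (A : set M),
    nbhs x A <-> exists2 e : R, 0 < e & forall y, d x y < e -> A y.

Definition locally_euclidean (R : realType) (M : topologicalType) : Prop :=
  forall x : M, exists (k : nat) (U : set M) (V : set 'rV[R]_k)
    (f : M -> 'rV[R]_k) (g : 'rV[R]_k -> M),
    [/\ open U, U x, open V & f @` U = V] /\
    [/\ (forall u, U u -> g (f u) = u),
         {within U, continuous f} & {within V, continuous g}].

(* iter_comp h s n = h (s 0) \o h (s 1) \o ... \o h (s n.-1) *)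
Fixpoint iter_comp (M : Type) (h : nat -> M -> M) (s : nat -> nat) (n : nat)
  : M -> M :=
  match n with
  | 0 => id
  | n'.+1 => fun y => iter_comp h s n' (h (s n') y)
  end.

(* Main.v *)
Require Import Defs.
From HB Require Import structures.
From mathcomp Require Import all_boot all_order all_algebra.
From mathcomp Require Import all_classical all_reals all_analysis.
Import Order.TTheory GRing.Theory Num.Theory.
Import numFieldNormedType.Exports.
Local Open Scope classical_set_scope.
Local Open Scope ring_scope.

Lemma metric_bounded (R : realType) (M : topologicalType) (d : M -> M -> R)
  (hd : is_metric d) (hcompat : metric_compatible d)
  (hcpt : compact [set: M]) (x0 : M) :
  exists N : nat, forall z, d x0 z < N%:R.
Proof.
case: hd => d0 _ dsym dtri.
have := (proj1 (compact_near_coveringP [set: M]) hcpt) nat \oo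
  (fun n z => d x0 z < n%:R) _.
case.
- move=> z _.
  exists ([set x' | d z x' < 1], [set n | (Num.truncn (d x0 z + 1)).+1 <= n]%N).
    split => /=; last by exists (Num.truncn (d x0 z + 1)).+1.
    by apply/hcompat; exists 1 => // y.
  case=> x' n /= [hx' hn].
  apply: (le_lt_trans (dtri _ z _)).
  apply: (lt_le_trans _ (_ : (Num.truncn (d x0 z + 1)).+1%:R <= n%:R)).
    apply: lt_trans (truncnS_gt _); by rewrite ltrD2l.
  by rewrite ler_nat.
- move=> N _ HN; exists N => z; exact: (HN N (leqnn N) z I).
Qed.

Lemma iter_comp_S (M : Type) (h : nat -> M -> M) s n y :
  iter_comp h s n.+1 y = iter_comp h s n (h (s n) y).
Proof. by []. Qed.

Theorem lemma3p7 (R : realType) (M : topologicalType) (d : M -> M -> R)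
  (hd : is_metric d) (hcompat : metric_compatible d)
  (hman : locally_euclidean R M) (hcpt : compact [set: M])
  (D B : set M) (hD : open D) (hB : open B) (hBD : closure B `<=` D)
  (h : nat -> M -> M) (beta : R) (hbeta : beta < 1)
  (hmaps : forall i, h i @` closure D `<=` D)
  (hcontr : forall i x y, closure D x -> closure D y ->
              d (h i x) (h i y) <= beta * d x y)
  (hcov : B `<=` \bigcup_i (h i @` B)) :
  forall x, B x -> exists s : nat -> nat,
    forall y, B y -> iter_comp h s n y @[n --> \oo] --> x.
Proof.
move=> x Bx.
have [d0 d0iff dsym dtri] := hd.
have BD z : B z -> closure D z.
  by move=> Bz; apply: subset_closure; apply: hBD; apply: subset_closure.
have hDD i z : closure D z -> closure D (h i z).
  by move=> Dz; apply: subset_closure; apply: (hmaps i); exists z.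
have [b [b0 b1 hb]] : exists b : R, [/\ 0 <= b, b < 1 &
    forall i x y, closure D x -> closure D y -> d (h i x) (h i y) <= b * d x y].
  case: (leP 0 beta) => hb0.
    by exists beta; split.
  exists 0; split => // i u v Du Dv; rewrite mul0r.
  apply: le_trans (hcontr i u v Du Dv) _.
  by apply: mulr_le0_ge0; [exact: ltW|exact: d0].
pose BT := {z : M | B z}.
have step (z : BT) : {p : nat * BT | h p.1 (sval p.2) = sval z}.
  apply: cid; have [i _ [w Bw hw]] := hcov _ (svalP z).
  by exists (i, exist _ w Bw).
pose pts := fix pts n := match n with
  | 0 => exist B x Bx
  | n'.+1 => (sval (step (pts n'))).2 end.
pose s n := (sval (step (pts n))).1.
exists s.
have ptsS n : h (s n) (sval (pts n.+1)) = sval (pts n).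
  exact: (svalP (step (pts n))).
have iterx n : iter_comp h s n (sval (pts n)) = x.
  elim: n => [//|n IH]; by rewrite iter_comp_S ptsS.
have iterD n : forall y, closure D y -> closure D (iter_comp h s n y).
  elim: n => [//|n IH] y Dy; rewrite iter_comp_S; exact/IH/hDD.
have contr n : forall y z, closure D y -> closure D z ->
    d (iter_comp h s n y) (iter_comp h s n z) <= b ^+ n * d y z.
  elim: n => [|n IH] y z Dy Dz; first by rewrite expr0 mul1r.
  rewrite !iter_comp_S; apply: le_trans (IH _ _ (hDD _ _ Dy) (hDD _ _ Dz)) _.
  rewrite exprSr -mulrA ler_wpM2l ?exprn_ge0 //; exact: hb.
have [N HN] := @metric_bounded R M d hd hcompat hcpt x.
move=> y By.
have bnd n : d x (iter_comp h s n y) <= b ^+ n * (2 * N%:R).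
  rewrite -[in d x _](iterx n) dsym.
  apply: le_trans (contr n _ _ (BD _ By) (BD _ (svalP (pts n)))) _.
  rewrite ler_wpM2l ?exprn_ge0 // mulr2n mulrDl !mul1r.
  apply: le_trans (dtri _ x _) _; rewrite dsym.
  by apply: lerD; apply: ltW.
move=> A /hcompat [e e0 He].
have cb : `|b| < 1 by rewrite ger0_norm.
have cvb := cvg_expr cb.
have c0 : 0 < 2 * N%:R + 1 :> R by rewrite ltr_wpDl // mulr_ge0.
have := cvgr0_norm_lt (fun n => b ^+ n) cvb _ (divr_gt0 e0 c0).
move=> Hev; suff : \forall n \near \oo, A (iter_comp h s n y) by [].
near=> n.
have Hn : `|b ^+ n| < e / (2 * N%:R + 1) by near: n; exact: (Hev eventually_filter).
apply: He.
apply: (le_lt_trans (bnd n)).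
rewrite ger0_norm ?exprn_ge0 // in Hn.
rewrite ltr_pdivlMr // in Hn.
apply: le_lt_trans Hn.
by rewrite ler_wpM2l ?exprn_ge0 // lerDl.
Unshelve. all: end_near.
Qed.
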